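(* Let $H\in\mathbb{R}^{N\times n}$ with $H^TH$ symmetric positive semidefinite (possibly singular), and let $R\in\mathbb{R}^{n\times n}$ be symmetric positive definite. Define $F(R)=H^TH(H^TH+R)^{-1}$, and for each integer $c\ge0$ define $$F_{aim}(H,R,c)=(H^TH+R)^{-1}\sum_{i=0}^cF(R)^i,\qquad F_{ar}(R)=(H^TH)^{\dagger}-F_{aim}(H,R,c).$$ Then $$\lim_{c\to+\infty}F_{ar}(R)=(H^TH)^{\dagger}-R^{-1}.$$
   Context: $(H^TH)^{\dagger}$ denotes the Moore–Penrose pseudo-inverse of $H^TH$. *)

(* Defs.v *)
From HB Require Import structures.
From mathcomp Require Import all_boot all_order all_algebra.
From mathcomp Require Import all_classical all_reals all_analysis.
Set Implicit Arguments. Unset Strict Implicit. Unset Printing Implicit Defensive.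
Import Order.TTheory GRing.Theory Num.Theory.
Local Open Scope ring_scope.
Local Open Scope classical_set_scope.

Definition is_MP_pinv (R : realType) (m n : nat) (A : 'M[R]_(m, n))
    (X : 'M[R]_(n, m)) : Prop :=
  [/\ A *m X *m A = A, X *m A *m X = X,
      (A *m X)^T = A *m X & (X *m A)^T = X *m A].

(* The Moore--Penrose pseudo-inverse (exists and is unique for real matrices). *)
Definition mp_pinv (R : realType) (m n : nat) (A : 'M[R]_(m, n)) : 'M[R]_(n, m) :=
  xget 0 [set X | is_MP_pinv A X].

Definition sym_posdef (R : realType) (n : nat) (M : 'M[R]_n) : Prop :=
  M^T = M /\ forall x : 'rV[R]_n, x != 0 -> 0 < (x *m M *m x^T) 0 0.

Definition F_mat (R : realType) (n : nat) (A Rm : 'M[R]_n) : 'M[R]_n :=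
  A *m invmx (A + Rm).

Definition F_aim (R : realType) (N n : nat) (H : 'M[R]_(N, n)) (Rm : 'M[R]_n)
    (c : nat) : 'M[R]_n :=
  invmx (H^T *m H + Rm) *m \sum_(i < c.+1) (F_mat (H^T *m H) Rm) ^+ i.

Definition F_ar (R : realType) (N n : nat) (H : 'M[R]_(N, n)) (Rm : 'M[R]_n)
    (c : nat) : 'M[R]_n :=
  mp_pinv (H^T *m H) - F_aim H Rm c.

(* Main.v *)
Require Import Defs.
From HB Require Import structures.
From mathcomp Require Import all_boot all_order all_algebra.
From mathcomp Require Import all_classical all_reals all_analysis.
From mathcomp Require Import ring lra.
Import Order.TTheory GRing.Theory Num.Theory.
Import numFieldNormedType.Exports.
Local Open Scope classical_set_scope.
Local Open Scope ring_scope.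
Set Implicit Arguments. Unset Strict Implicit. Unset Printing Implicit Defensive.

Definition bf (R : realType) n (M : 'M[R]_n) (u v : 'rV[R]_n) : R :=
  (u *m M *m v^T) 0 0.

Lemma bfE (R : realType) n (M : 'M[R]_n) u v :
  bf M u v = \sum_j \sum_i u 0 i * M i j * v 0 j.
Proof.
rewrite /bf mxE; apply: eq_bigr => j _; rewrite mxE big_distrl /=.
by apply: eq_bigr => i _; rewrite mxE.
Qed.

Lemma bfDl (R : realType) n (M : 'M[R]_n) u w v : bf M (u + w) v = bf M u v + bf M w v.
Proof. by rewrite /bf !mulmxDl mxE. Qed.
Lemma bfDr (R : realType) n (M : 'M[R]_n) u w v : bf M v (u + w) = bf M v u + bf M v w.
Proof. by rewrite /bf linearD /= mulmxDr mxE. Qed.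
Lemma bfNl (R : realType) n (M : 'M[R]_n) u v : bf M (- u) v = - bf M u v.
Proof. by rewrite /bf !mulNmx mxE. Qed.
Lemma bfNr (R : realType) n (M : 'M[R]_n) u v : bf M v (- u) = - bf M v u.
Proof. by rewrite /bf linearN /= mulmxN mxE. Qed.
Lemma bfMD (R : realType) n (M N : 'M[R]_n) u v : bf (M + N) u v = bf M u v + bf N u v.
Proof. by rewrite /bf mulmxDr mulmxDl mxE. Qed.
Lemma bf_sym (R : realType) n (M : 'M[R]_n) u v : M^T = M -> bf M u v = bf M v u.
Proof.
move=> sM; rewrite /bf -[in LHS](trmxK (u *m M *m v^T)) mxE.
by rewrite !trmx_mul trmxK sM mulmxA.
Qed.

Lemma bf_unit (R : realType) n (M : 'M[R]_n) :
  (forall x : 'rV[R]_n, x != 0 -> 0 < bf M x x) -> M \in unitmx.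
Proof.
move=> pd; rewrite unitmxE unitfE; apply/negP => /det0P [v v0 vM].
by have := pd v v0; rewrite /bf vM mul0mx mxE ltxx.
Qed.

Lemma psd_HH (R : realType) N n (H : 'M[R]_(N, n)) u : 0 <= bf (H^T *m H) u u.
Proof.
rewrite /bf mulmxA -[u *m H^T *m H *m u^T]mulmxA -{2}(trmxK H) -trmx_mul.
rewrite mxE; apply: sumr_ge0 => i _; rewrite !mxE -expr2; exact: sqr_ge0.
Qed.

Lemma bfZl (R : realType) n (M : 'M[R]_n) a u v : bf M (a *: u) v = a * bf M u v.
Proof. by rewrite /bf -!scalemxAl mxE. Qed.
Lemma bfZr (R : realType) n (M : 'M[R]_n) a u v : bf M v (a *: u) = a * bf M v u.
Proof. by rewrite /bf linearZ /= -scalemxAr mxE. Qed.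
Lemma bf0 (R : realType) n (M : 'M[R]_n) v : bf M 0 v = 0.
Proof. by rewrite /bf !mul0mx mxE. Qed.

Lemma cont_sum (T : topologicalType) (R : realType) (I : finType) (f : I -> T -> R) :
  (forall i, continuous (f i)) -> continuous (fun x => \sum_i f i x).
Proof.
move=> fc.
suff: forall s : seq I, continuous (fun x => \sum_(i <- s) f i x) by apply.
elim => [|i s IH] y.
  under eq_fun do rewrite big_nil. exact: cst_continuous.
under eq_fun do rewrite big_cons.
exact: (continuousD (fc i y) (IH y)).
Qed.

Lemma bf_cont (R : realType) n (M : 'M[R]_n) : continuous (fun x => bf M x x).
Proof.
under eq_fun do rewrite bfE.
apply: cont_sum => j; apply: cont_sum => i y.
have h1 := (@coord_continuous R 1 n 0 i y).
have h2 := (@coord_continuous R 1 n 0 j y).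
have h3 : {for y, continuous (fun _ : 'rV[R]_n => M i j)} by exact: cst_continuous.
have := continuousM (continuousM h1 h3) h2.
exact.
Qed.

Lemma pd_lb (R : realType) n (M : 'M[R]_n) :
  (forall x : 'rV[R]_n, x != 0 -> 0 < bf M x x) ->
  exists2 d, 0 < d & forall x, d * `|x| ^+ 2 <= bf M x x.
Proof.
move=> pd.
pose A := [set x : 'rV[R]_n | `|x| = 1].
have [A0|A0] := pselect (A !=set0); last first.
  exists 1 => // x; have [->|x0] := eqVneq x 0; first by rewrite normr0 expr0n mulr0 bf0.
  exfalso; apply: A0; exists (`|x|^-1 *: x).
  by rewrite /A /= normrZ normfV normr_id mulVf // normr_eq0.
have cA : compact A.
  apply: bounded_closed_compact.
    exists 1; split; first exact: num_real.
    by move=> r r1 x /= ->; exact: ltW.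
  apply: (@preimage_closed _ _ (fun x : 'rV[R]_n => `|x|) [set x | x = 1]).
    by move=> x _; exact: norm_continuous.
  exact: closed_eq.
have cf : {within A, continuous (fun x => bf M x x)}.
  by apply: continuous_subspaceT; exact: bf_cont.
have [c cA' cmin] := EVT_min_rV A0 cA cf.
have c1 : `|c| = 1 by move: cA'; rewrite inE.
have c0 : c != 0 by apply/eqP => c0; move: c1; rewrite c0 normr0 => /eqP; rewrite eq_sym oner_eq0.
exists (bf M c c); first exact: pd.
move=> x; have [->|x0] := eqVneq x 0; first by rewrite normr0 expr0n mulr0 bf0.
have nx0 : `|x| != 0 by rewrite normr_eq0.
have := cmin (`|x|^-1 *: x); rewrite inE /A /= normrZ normfV normr_id mulVf // => /(_ erefl).
rewrite bfZl bfZr mulrA -expr2 exprVn => h.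
rewrite -(ler_pM2l (_ : 0 < `|x|^-2)); last by rewrite invr_gt0 exprn_gt0 // normr_gt0.
by rewrite mulrCA mulVf ?mulr1 // expf_neq0.
Qed.

Lemma coord_le (R : realType) m n (u : 'M[R]_(m, n)) i j : `|u i j| <= `|u|.
Proof.
rewrite -[`|u|]/(mx_norm u) mx_normrE.
exact: (le_bigmax _ (fun ij : 'I_m * 'I_n => `|u ij.1 ij.2|) (i, j)).
Qed.

Lemma bf_le (R : realType) n (A : 'M[R]_n) u :
  bf A u u <= (\sum_j \sum_i `|A i j|) * `|u| ^+ 2.
Proof.
rewrite bfE big_distrl; apply: ler_sum => j _; rewrite big_distrl; apply: ler_sum => i _ /=.
apply: le_trans (ler_norm _) _; rewrite !normrM.
rewrite [`|u 0 i| * _]mulrC -mulrA expr2; apply: ler_wpM2l => //.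
by apply: ler_pM => //; exact: coord_le.
Qed.

Lemma contract (R : realType) N n (H : 'M[R]_(N, n)) (Rm : 'M[R]_n) d u :
  Rm^T = Rm -> 0 < d -> (forall x, d * `|x| ^+ 2 <= bf Rm x x) ->
  (H^T *m H + Rm) \in unitmx ->
  bf (H^T *m H + Rm) (u *m (H^T *m H *m invmx (H^T *m H + Rm)))
     (u *m (H^T *m H *m invmx (H^T *m H + Rm))) <=
  ((\sum_j \sum_i `|(H^T *m H) i j|) / d) / (1 + ((\sum_j \sum_i `|(H^T *m H) i j|) / d))
   * bf (H^T *m H + Rm) u u.
Proof.
move=> sR d0 hd Su.
set A := H^T *m H. set S := A + Rm. set t := (\sum_j \sum_i `|A i j|) / d.
set v := u *m (A *m invmx S).
have sA : A^T = A by rewrite /A trmx_mul trmxK.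
have vS : v *m S = u *m A by rewrite /v mulmxA mulmxKV.
have e1 : bf S v v = bf A u v by rewrite /bf vS.
have nnR x : 0 <= bf Rm x x.
  exact: le_trans (mulr_ge0 (ltW d0) (sqr_ge0 _)) (hd x).
have hAS x : bf A x x <= bf S x x by rewrite /S bfMD lerDl nnR.
have sym : bf A v u = bf A u v by apply: bf_sym.
have psd := psd_HH H (u - v).
rewrite -/A bfDl !bfDr !bfNl !bfNr sym in psd.
have h1 : bf S v v <= bf A u u.
  have := hAS v; rewrite e1 => h; lra.
apply: le_trans h1 _.
have CA0 : 0 <= \sum_j \sum_i `|A i j| by apply: sumr_ge0 => j _; apply: sumr_ge0.
have t0 : 0 <= t by rewrite /t divr_ge0 // ltW.
have h2 : bf A u u <= t * bf Rm u u.
  apply: le_trans (bf_le A u) _.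
  rewrite /t -mulrA; apply: ler_wpM2l => //.
  by rewrite ler_pdivlMl // mulrC.
rewrite /S bfMD mulrAC ler_pdivlMr; last by lra.
nra.
Qed.

Lemma iter_contract (R : realType) N n (H : 'M[R]_(N, n)) (Rm : 'M[R]_n) d q :
  Rm^T = Rm -> 0 < d -> (forall x, d * `|x| ^+ 2 <= bf Rm x x) ->
  (H^T *m H + Rm) \in unitmx ->
  q = ((\sum_j \sum_i `|(H^T *m H) i j|) / d) / (1 + ((\sum_j \sum_i `|(H^T *m H) i j|) / d)) ->
  forall k u,
  bf (H^T *m H + Rm) (u *m (H^T *m H *m invmx (H^T *m H + Rm)) ^+ k)
     (u *m (H^T *m H *m invmx (H^T *m H + Rm)) ^+ k) <= q ^+ k * bf (H^T *m H + Rm) u u.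
Proof.
move=> sR d0 hd Su qE.
have CA0 : 0 <= \sum_j \sum_i `|(H^T *m H) i j| by apply: sumr_ge0 => j _; apply: sumr_ge0.
have t0 : 0 <= (\sum_j \sum_i `|(H^T *m H) i j|) / d by rewrite divr_ge0 // ltW.
have q0 : 0 <= q by rewrite qE divr_ge0 //; lra.
elim => [|k IH] u.
  by rewrite !expr0 mul1r -idmxE mulmx1.
rewrite exprSr -mulmxE mulmxA.
apply: le_trans; first exact: (contract _ sR d0 hd Su).
rewrite -qE.
by apply: le_trans (ler_wpM2l q0 (IH u)) _; rewrite mulrA -exprS.
Qed.

Lemma Faim_eq (R : realType) N n (H : 'M[R]_(N, n)) (Rm : 'M[R]_n) c :
  Rm \in unitmx -> (H^T *m H + Rm) \in unitmx ->
  F_aim H Rm c = invmx Rm - invmx Rm *m (H^T *m H *m invmx (H^T *m H + Rm)) ^+ c.+1.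
Proof.
move=> Ru Su; rewrite /F_aim /F_mat.
set A := H^T *m H; set S := A + Rm; set F := A *m invmx S.
have IF : 1 - F = Rm *m invmx S.
  by rewrite /F -idmxE -{1}(mulmxV Su) -mulmxBl /S addrAC subrr add0r.
have tel : (1 - F) * \sum_(i < c.+1) F ^+ i = 1 - F ^+ c.+1.
  by rewrite -[1 - F]opprB mulNr -subrX1 opprB.
transitivity (invmx Rm *m ((Rm *m invmx S) *m \sum_(i < c.+1) F ^+ i)).
  by rewrite -mulmxA mulKmx.
by rewrite -IF mulmxE tel -mulmxE mulmxBr -idmxE mulmx1.
Qed.

Theorem theorem3 (R : realType) (N n : nat) (H : 'M[R]_(N, n)) (Rm : 'M[R]_n) :
  sym_posdef Rm ->
  (fun c : nat => F_ar H Rm c) @ \oo --> mp_pinv (H^T *m H) - invmx Rm.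
Proof.
move=> [sR pdR].
have [d d0 hd] := pd_lb pdR.
have Ru : Rm \in unitmx := bf_unit pdR.
have Su : (H^T *m H + Rm) \in unitmx.
  apply: bf_unit => x x0; rewrite bfMD; apply: ltr_wpDl; [exact: psd_HH | exact: pdR].
have CA0 : 0 <= \sum_j \sum_i `|(H^T *m H) i j| by apply: sumr_ge0 => j _; apply: sumr_ge0.
set t := (\sum_j \sum_i `|(H^T *m H) i j|) / d.
have t0 : 0 <= t by rewrite divr_ge0 // ltW.
have ic := iter_contract sR d0 hd Su (erefl (t / (1 + t))).
set q := t / (1 + t) in ic.
have q0 : 0 <= q by rewrite divr_ge0 //; lra.
have q1 : q < 1 by rewrite ltr_pdivrMr; lra.
set A := H^T *m H in ic *; set S := A + Rm in ic Su *.
set F := A *m invmx S in ic *.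
have key c : F_ar H Rm c = (mp_pinv A - invmx Rm) + invmx Rm *m F ^+ c.+1.
  by rewrite /F_ar Faim_eq // opprB addrA addrAC.
set C := \sum_i bf S (row i (invmx Rm)) (row i (invmx Rm)).
have Sge0 x : 0 <= bf S x x.
  by rewrite bfMD; apply: addr_ge0; [exact: psd_HH | exact: le_trans (mulr_ge0 (ltW d0) (sqr_ge0 _)) (hd x)].
have C0 : 0 <= C by apply: sumr_ge0.
have bnd k i j : `|(invmx Rm *m F ^+ k) i j| ^+ 2 <= d^-1 * (q ^+ k * C).
  set w := row i (invmx Rm) *m F ^+ k.
  have -> : (invmx Rm *m F ^+ k) i j = w 0 j by rewrite /w -row_mul [RHS]mxE.
  have h1 : `|w 0 j| ^+ 2 <= `|w| ^+ 2.
    by rewrite !expr2; apply: ler_pM => //; exact: coord_le.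
  have h2 : d * `|w| ^+ 2 <= bf S w w.
    apply: le_trans (hd w) _; rewrite /S bfMD lerDr; exact: psd_HH.
  have h3 : bf S w w <= q ^+ k * C.
    apply: le_trans (ic k _) _; apply: ler_wpM2l; first exact: exprn_ge0.
    rewrite /C (bigD1 i) //= lerDl; apply: sumr_ge0 => l _; exact: Sge0.
  rewrite ler_pdivlMl //; apply: le_trans h3; apply: le_trans h2.
  by rewrite ler_wpM2l // ltW.
apply/cvgrPdist_lt => e e0.
have e20 : 0 < e ^+ 2 * d / (C + 1) by rewrite divr_gt0 ?mulr_gt0 ?exprn_gt0 //; lra.
have := cvg_expr (z := q); rewrite ger0_norm // => /(_ q1) /cvgrPdist_lt /(_ _ e20).
apply: filterS => c; rewrite sub0r normrN ger0_norm ?exprn_ge0 // => hc.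
rewrite key opprD addrA subrr add0r normrN.
rewrite -[`|_|]/(mx_norm _) mx_normrE; apply: bigmax_lt => // -[i j] _ /=.
have hb := bnd c.+1 i j.
have : d^-1 * (q ^+ c.+1 * C) < e ^+ 2.
  have hQ : q ^+ c.+1 <= q ^+ c.
    by rewrite exprSr -[leRHS]mulr1 ler_wpM2l ?exprn_ge0 // ltW.
  have hQ0 : 0 <= q ^+ c by exact: exprn_ge0.
  move: hc; rewrite ltr_pdivlMr; last by lra.
  move=> hc; rewrite mulrC ltr_pdivrMr //.
  nra.
move=> h; have := le_lt_trans hb h.
have := normr_ge0 ((invmx Rm *m F ^+ c.+1) i j).
rewrite !expr2; nra.
Qed.
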